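(* Let $n\geqslant 3$ and let $\lambda=(\lambda_1,\ldots,\lambda_s)$ be a partition of $n$ with $s\geqslant 2$ and $\lambda_1>\lambda_2$. Put $m=\lambda_2+\cdots+\lambda_s$. Let $t$ be a standard tableau of shape $\lambda$ with $n$ placed in the rightmost cell of its first row. Then the polytabloid $\mathbf{e}_t$ is an eigenvector of $J_n$ (acting on $M^\lambda$) with eigenvalue $n-m-1$, i.e. $J_n(\mathbf{e}_t)=(n-m-1)\mathbf{e}_t$.
   Context: For $\pi\in\mathrm{Sym}_n$ and a tableau $t$ of shape $\lambda$ (filling of the Young diagram with $1,\ldots,n$), $\pi(t)$ replaces each entry $x$ by $\pi(x)$. The $\lambda$-tabloid $\{t\}$ is the set of tableaux obtained from $t$ by permuting entries within rows; $M^\lambda$ is the complex vector space with basis the $\lambda$-tabloids, with $\mathrm{Sym}_n$ acting by $\pi\{t\}=\{\pi(t)\}$. $C_t$ is the column-stabilizer of $t$ and $\mathbf{e}_t=\sum_{\sigma\in C_t}\mathrm{sgn}(\sigma)\{\sigma(t)\}$. The Jucys–Murphy element $J_n=(1\ n)+(2\ n)+\cdots+(n-1\ n)$ acts on $M^\lambda$ via this action. A tableau is standard if its entries increase along rows and down columns. *)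

(* Defs.v *)
From HB Require Import structures.
From mathcomp Require Import all_boot all_order all_fingroup all_algebra all_field.
Set Implicit Arguments. Unset Strict Implicit. Unset Printing Implicit Defensive.
Import GRing.Theory Num.Theory.
Local Open Scope ring_scope.

(* Entries 1..n are encoded as ordinals 0..n-1 of 'I_n (entry k+1 <-> k).
   Cells of a Young diagram are pairs (row, column) in 'I_n * 'I_n
   (0-based); a tableau is a filling: cells of the diagram carry Some entry,
   cells outside the diagram carry None. *)
Definition tab (n : nat) := {ffun 'I_n * 'I_n -> option 'I_n}.

Definition is_partition (n : nat) (la : seq nat) : bool :=
  [&& sorted geq la, all (fun k => 0 < k)%N la & sumn la == n].

Definition in_diagram n (la : seq nat) (c : 'I_n * 'I_n) : bool :=
  (c.2 < nth 0 la c.1)%N.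

Definition is_tableau n (la : seq nat) (t : tab n) : bool :=
  [forall c, (t c != None) == in_diagram la c] &&
  [forall c, forall c', (t c != None) ==> (t c == t c') ==> (c == c')].

Definition ent n (t : tab n) (c : 'I_n * 'I_n) : nat :=
  if t c is Some x then val x else 0.

Definition is_standard n (la : seq nat) (t : tab n) : bool :=
  is_tableau la t &&
  [forall c, forall c', (t c != None) ==> (t c' != None) ==>
     (((c.1 == c'.1) && (c.2 < c'.2)%N) || ((c.2 == c'.2) && (c.1 < c'.1)%N))
     ==> (ent t c < ent t c')%N].

Definition perm_tab n (pi : {perm 'I_n}) (t : tab n) : tab n :=
  [ffun c => omap pi (t c)].

Definition same_row n (t : tab n) (x y : 'I_n) : bool :=
  [exists i, exists j, exists j', (t (i, j) == Some x) && (t (i, j') == Some y)].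
Definition same_col n (t : tab n) (x y : 'I_n) : bool :=
  [exists j, exists i, exists i', (t (i, j) == Some x) && (t (i', j) == Some y)].

Definition row_stab n (t : tab n) : {set {perm 'I_n}} :=
  [set pi : {perm 'I_n} | [forall x, same_row t x (pi x)]].
Definition col_stab n (t : tab n) : {set {perm 'I_n}} :=
  [set pi : {perm 'I_n} | [forall x, same_col t x (pi x)]].

Definition tabloid n (t : tab n) : {set tab n} :=
  [set perm_tab pi t | pi in row_stab t].

(* Vectors: complex-valued functions on sets of tableaux; M^la is the span of
   the indicator vectors of the la-tabloids. *)
Notation vec n := {ffun {set tab n} -> algC^o}.

Definition delta n (S : {set tab n}) : vec n := [ffun S' => ((S' == S)%:R : algC)].

(* pi acts on a set of tableaux elementwise, so pi{t} = {pi(t)} *)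
Definition perm_set n (pi : {perm 'I_n}) (S : {set tab n}) : {set tab n} :=
  [set perm_tab pi u | u in S].

Definition act n (pi : {perm 'I_n}) (f : vec n) : vec n :=
  \sum_(S : {set tab n}) f S *: delta (perm_set pi S).

Definition polytabloid n (t : tab n) : vec n :=
  \sum_(sigma in col_stab t) ((-1) ^+ odd_perm sigma) *: delta (tabloid (perm_tab sigma t)).

(* Jucys--Murphy element J_n = (1 n) + ... + (n-1 n): in the 0-based encoding,
   the sum of transpositions (x y) with val y = n-1 and val x < n-1. *)
Definition JM n (f : vec n) : vec n :=
  \sum_(x : 'I_n) \sum_(y : 'I_n | (val y == n.-1) && (val x < n.-1)%N)
     act (tperm x y) f.

(* Main.v *)
Require Import Defs.
From mathcomp Require Import all_boot all_order all_fingroup all_algebra all_field.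
From mathcomp Require Import zify.
Import GRing.Theory Num.Theory.
Local Open Scope ring_scope.
Set Implicit Arguments. Unset Strict Implicit.

Section Gen.
Variable n : nat.
Implicit Types (u w : tab n) (pi rho : {perm 'I_n}).

Lemma perm_tabM pi rho u : perm_tab pi (perm_tab rho u) = perm_tab (rho * pi)%g u.
Proof. by apply/ffunP => c; rewrite !ffunE; case: (u c) => //= x; rewrite permM. Qed.

Lemma omap_perm_eq pi (o : option 'I_n) x : (omap pi o == Some x) = (o == Some (pi^-1 x)%g).
Proof.
case: o => //= z; apply/eqP/eqP => [[<-]|[->]]; by rewrite ?permK ?permKV.
Qed.

Lemma same_row_perm pi u x y :
  same_row (perm_tab pi u) x y = same_row u (pi^-1 x)%g (pi^-1 y)%g.
Proof.
rewrite /same_row; apply: eq_existsb => i; apply: eq_existsb => j; apply: eq_existsb => j'.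
by rewrite !ffunE !omap_perm_eq.
Qed.

Lemma same_col_perm pi u x y :
  same_col (perm_tab pi u) x y = same_col u (pi^-1 x)%g (pi^-1 y)%g.
Proof.
rewrite /same_col; apply: eq_existsb => i; apply: eq_existsb => j; apply: eq_existsb => j'.
by rewrite !ffunE !omap_perm_eq.
Qed.

Lemma row_stab_perm pi rho u :
  (rho \in row_stab (perm_tab pi u)) = ((pi * rho * pi^-1)%g \in row_stab u).
Proof.
rewrite !inE; apply/forallP/forallP => H x.
  by have := H (pi x); rewrite same_row_perm permK !permM.
by have := H (pi^-1 x)%g; rewrite same_row_perm !permM permKV.
Qed.

Lemma tabloid_perm pi u : tabloid (perm_tab pi u) = perm_set pi (tabloid u).
Proof.
apply/setP => v; rewrite /tabloid /perm_set -imset_comp.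
apply/imsetP/imsetP => [[rho Hr ->]|[rho Hr ->]].
  exists (pi * rho * pi^-1)%g; first by rewrite -row_stab_perm.
  by rewrite /= !perm_tabM -mulgA mulVg mulg1.
exists (pi^-1 * rho * pi)%g.
  by rewrite row_stab_perm !mulgA mulgV mul1g mulgK.
by rewrite /= !perm_tabM !mulgA mulgV mul1g.
Qed.

Definition inj_tab u := forall c c' x, u c = Some x -> u c' = Some x -> c = c'.

Lemma inj_perm_tab pi u : inj_tab u -> inj_tab (perm_tab pi u).
Proof.
move=> H c c' x; rewrite !ffunE => /eqP; rewrite omap_perm_eq => /eqP h1.
by move/eqP; rewrite omap_perm_eq => /eqP h2; apply: H h1 h2.
Qed.

Lemma same_row_trans u x y z : inj_tab u ->
  same_row u x y -> same_row u y z -> same_row u x z.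
Proof.
move=> H /existsP[i /existsP[j /existsP[j' /andP[/eqP h1 /eqP h2]]]].
move=> /existsP[i2 /existsP[k /existsP[k' /andP[/eqP h3 /eqP h4]]]].
case: (H _ _ _ h2 h3) => Ei _; rewrite Ei in h1.
by apply/existsP; exists i2; apply/existsP; exists j; apply/existsP; exists k'; rewrite h1 h4 !eqxx.
Qed.


Lemma same_col_trans u x y z : inj_tab u ->
  same_col u x y -> same_col u y z -> same_col u x z.
Proof.
move=> H /existsP[i /existsP[j /existsP[j' /andP[/eqP h1 /eqP h2]]]].
move=> /existsP[i2 /existsP[k /existsP[k' /andP[/eqP h3 /eqP h4]]]].
case: (H _ _ _ h2 h3) => _ Ei; rewrite Ei in h1.
by apply/existsP; exists i2; apply/existsP; exists j; apply/existsP; exists k'; rewrite h1 h4 !eqxx.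
Qed.

Lemma same_row_sym u x y : same_row u x y -> same_row u y x.
Proof.
move=> /existsP[i /existsP[j /existsP[j' /andP[h1 h2]]]].
by apply/existsP; exists i; apply/existsP; exists j'; apply/existsP; exists j; rewrite h1 h2.
Qed.

Lemma same_col_sym u x y : same_col u x y -> same_col u y x.
Proof.
move=> /existsP[i /existsP[j /existsP[j' /andP[h1 h2]]]].
by apply/existsP; exists i; apply/existsP; exists j'; apply/existsP; exists j; rewrite h1 h2.
Qed.

Lemma row_stabM u rho rho' : inj_tab u -> rho \in row_stab u -> rho' \in row_stab u ->
  (rho * rho')%g \in row_stab u.
Proof.
move=> H; rewrite !inE => /forallP h1 /forallP h2; apply/forallP => x.
by rewrite permM; apply: same_row_trans H (h1 x) (h2 _).
Qed.

Lemma row_stabV u rho : rho \in row_stab u -> (rho^-1)%g \in row_stab u.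
Proof.
rewrite !inE => /forallP h1; apply/forallP => x.
by have := h1 (rho^-1 x)%g; rewrite permKV => /same_row_sym.
Qed.

Lemma col_stabM u rho rho' : inj_tab u -> rho \in col_stab u -> rho' \in col_stab u ->
  (rho * rho')%g \in col_stab u.
Proof.
move=> H; rewrite !inE => /forallP h1 /forallP h2; apply/forallP => x.
by rewrite permM; apply: same_col_trans H (h1 x) (h2 _).
Qed.

Lemma col_stabV u rho : rho \in col_stab u -> (rho^-1)%g \in col_stab u.
Proof.
rewrite !inE => /forallP h1; apply/forallP => x.
by have := h1 (rho^-1 x)%g; rewrite permKV => /same_col_sym.
Qed.

Lemma tabloid_stab u rho : inj_tab u -> rho \in row_stab u ->
  tabloid (perm_tab rho u) = tabloid u.
Proof.
move=> H Hr; rewrite tabloid_perm; apply/setP => v.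
rewrite /perm_set /tabloid -imset_comp; apply/imsetP/imsetP => [[r Hr' ->]|[r Hr' ->]].
  by exists (r * rho)%g; [apply: row_stabM | rewrite /= perm_tabM].
exists (r * rho^-1)%g; first by apply: row_stabM => //; apply: row_stabV.
by rewrite /= perm_tabM mulgKV.
Qed.

Lemma act_poly (I : finType) (A : pred I) (c : I -> algC) (S : I -> {set tab n}) pi :
  Defs.act pi (\sum_(i in A) c i *: delta (S i)) =
  \sum_(i in A) c i *: delta (perm_set pi (S i)).
Proof.
rewrite /Defs.act.
under eq_bigr => T _ do rewrite sum_ffunE scaler_suml.
rewrite exchange_big /=; apply: eq_bigr => i _.
rewrite (bigD1 (S i)) //= big1 ?addr0.
  by rewrite !ffunE eqxx /= -[c i *: (1 : algC^o)]/(c i * 1) mulr1.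
move=> T /negbTE hT; rewrite !ffunE hT /=.
by rewrite -[c i *: (0 : algC^o)]/(c i * 0) mulr0 scale0r.
Qed.

Lemma cancel_sum (C : {set {perm 'I_n}}) w (tau : {perm 'I_n}) :
  (forall s, ((tau * s)%g \in C) = (s \in C)) -> odd_perm tau ->
  (forall s, tabloid (perm_tab (tau * s)%g w) = tabloid (perm_tab s w)) ->
  \sum_(s in C) ((-1) ^+ odd_perm s : algC) *: delta (tabloid (perm_tab s w)) = 0.
Proof.
move=> HC Ho Ht.
set S := (X in X = 0).
have HS : S = - S.
  rewrite {1}/S (reindex_inj (mulgI tau)) /=.
  under eq_bigl => s do rewrite HC.
  rewrite /S -sumrN; apply: eq_bigr => s _.
  by rewrite Ht odd_permM Ho signr_addb expr1 mulN1r scaleNr.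
have : (2%:R : algC) *: S = 0 by rewrite scaler_nat mulr2n {1}HS addNr.
by move/eqP; rewrite scaler_eq0 pnatr_eq0 /= => /eqP.
Qed.

End Gen.

Section Tab.
Variables (n : nat) (la : seq nat) (t : tab n).
Hypothesis Hinj : inj_tab t.
Hypothesis Hdiag : forall c, (t c != None) = in_diagram la c.
Hypothesis Hsurj : forall x, exists c, t c = Some x.
Hypothesis Hsort : forall i j, (i <= j)%N -> (nth 0%N la j <= nth 0%N la i)%N.
Hypothesis Hl : (nth 0%N la 1 < nth 0%N la 0)%N.
Variables (i0 jN N : 'I_n).
Hypothesis Hi0 : nat_of_ord i0 = 0%N.
Hypothesis HjN : nat_of_ord jN = (nth 0%N la 0).-1.
Hypothesis HN : t (i0, jN) = Some N.

Definition row0 x := [exists j, t (i0, j) == Some x].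

Lemma col_fixN s : s \in col_stab t -> s N = N.
Proof.
rewrite inE => /forallP /(_ N) /existsP[j /existsP[i /existsP[i' /andP[/eqP h1 /eqP h2]]]].
case: (Hinj h1 HN) => _ Ej; rewrite Ej in h2.
have hd : in_diagram la (i', jN) by rewrite -Hdiag h2.
rewrite /in_diagram /= HjN in hd.
have Ei : i' = i0.
  apply: ord_inj; rewrite Hi0; apply/eqP; rewrite -leqn0 leqNgt; apply/negP => hpos.
  have := Hsort hpos; lia.
by rewrite Ei HN in h2; case: h2.
Qed.

Lemma row0_stab x : row0 x -> tperm x N \in row_stab t.
Proof.
move=> /existsP[j /eqP hj]; rewrite inE; apply/forallP => y.
case: (tpermP x N y) => [->|->|_ _].
- by apply/existsP; exists i0; apply/existsP; exists j; apply/existsP; exists jN; rewrite hj HN !eqxx.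
- by apply/existsP; exists i0; apply/existsP; exists jN; apply/existsP; exists j; rewrite hj HN !eqxx.
- have [c hc] := Hsurj y; apply/existsP; exists c.1; apply/existsP; exists c.2; apply/existsP; exists c.2.
  by rewrite -surjective_pairing hc eqxx.
Qed.

Lemma nonrow0_zero x : ~~ row0 x -> x != N ->
  \sum_(s in col_stab t) ((-1) ^+ odd_perm s : algC) *:
      delta (tabloid (perm_tab s (perm_tab (tperm x N) t))) = 0.
Proof.
move=> hx hxN.
have [[r c] hc] := Hsurj x.
have hr : r != i0.
  by apply: contra hx => /eqP Er; apply/existsP; exists c; rewrite -Er hc.
have hd : in_diagram la (r, c) by rewrite -Hdiag hc.
rewrite /in_diagram /= in hd.
have hr1 : (1 <= r)%N.
  rewrite lt0n; apply: contra hr => /eqP h; apply/eqP; apply: ord_inj; rewrite h Hi0 //.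
have hs := Hsort hr1.
have [a ha] : exists a, t (i0, c) = Some a.
  case E: (t (i0, c)) => [a|]; first by exists a.
  move: (Hdiag (i0, c)); rewrite E /= /in_diagram /= Hi0.
  have -> : (c < nth 0 la 0)%N by lia.
  by [].
have haN : a != N.
  apply/eqP => E; rewrite E in ha; case: (Hinj ha HN) => hcj; have : nat_of_ord c = nat_of_ord jN by rewrite hcj.
  rewrite HjN; lia.
have hax : a != x.
  by apply/eqP => E; rewrite E in ha; case: (Hinj ha hc) => E'; rewrite E' eqxx in hr.
set w := perm_tab (tperm x N) t.
have Hw : inj_tab w by apply: inj_perm_tab.
have HtC : tperm a x \in col_stab t.
  rewrite inE; apply/forallP => y; case: (tpermP a x y) => [->|->|_ _].
  - by apply/existsP; exists c; apply/existsP; exists i0; apply/existsP; exists r; rewrite ha hc !eqxx.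
  - by apply/existsP; exists c; apply/existsP; exists r; apply/existsP; exists i0; rewrite ha hc !eqxx.
  - have [c' hc'] := Hsurj y; apply/existsP; exists c'.2; apply/existsP; exists c'.1; apply/existsP; exists c'.1.
    by rewrite -surjective_pairing hc' eqxx.
have HtR : tperm a x \in row_stab w.
  rewrite inE; apply/forallP => y; rewrite same_row_perm tpermV.
  case: (tpermP a x y) => [->|->|_ _].
  - rewrite tpermL tpermD ?(eq_sym x) ?(eq_sym N) //.
    by apply/existsP; exists i0; apply/existsP; exists c; apply/existsP; exists jN; rewrite ha HN !eqxx.
  - rewrite tpermL tpermD ?(eq_sym x) ?(eq_sym N) //.
    by apply/existsP; exists i0; apply/existsP; exists jN; apply/existsP; exists c; rewrite ha HN !eqxx.
  - have [c' hc'] := Hsurj (tperm x N y); apply/existsP; exists c'.1; apply/existsP; exists c'.2; apply/existsP; exists c'.2.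
    by rewrite -surjective_pairing hc' eqxx.
apply: (cancel_sum (tau := tperm a x)).
- move=> s; apply/idP/idP => h; last by apply: col_stabM.
  have : ((tperm a x)^-1 * (tperm a x * s))%g \in col_stab t.
    by apply: col_stabM => //; rewrite tpermV.
  by rewrite mulKg.
- by rewrite odd_tperm.
- move=> s; rewrite -perm_tabM tabloid_perm tabloid_stab //.
  by rewrite -tabloid_perm.
Qed.

Hypothesis HNv : nat_of_ord N = n.-1.
Hypothesis Hk : (nth 0%N la 0 <= n)%N.

Lemma JM_poly : JM (polytabloid t) =
  (#|[set x | (x != N) && row0 x]|)%:R *: polytabloid t.
Proof.
rewrite /JM.
have E1 : forall x : 'I_n,
  \sum_(y | (val y == n.-1) && (val x < n.-1)%N) Defs.act (tperm x y) (polytabloid t)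
  = if x != N then Defs.act (tperm x N) (polytabloid t) else 0.
  move=> x; have -> : (val x < n.-1)%N = (x != N).
    have := ltn_ord x; rewrite -(inj_eq (@ord_inj n)) HNv /=; lia.
  case: ifP => _; last by rewrite big_pred0 // => y; rewrite andbF.
  rewrite (big_pred1 N) // => y; rewrite andbT /= -HNv.
  by rewrite -(inj_eq (@ord_inj n)).
under eq_bigr => x _ do rewrite E1.
rewrite -big_mkcond /=.
rewrite {2}/polytabloid.
under eq_bigr => x _ do rewrite /polytabloid act_poly.
rewrite exchange_big /=.
rewrite (eq_bigr (fun s => \sum_(x | x != N) ((-1) ^+ odd_perm s : algC) *:
   delta (tabloid (perm_tab s (perm_tab (tperm x N) t))))); last first.
  move=> s hs; rewrite (reindex_inj (@perm_inj _ s)) /=; apply: eq_big => x.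
    by rewrite -{1}(col_fixN hs) (inj_eq perm_inj).
  move=> _; rewrite -tabloid_perm !perm_tabM; congr (_ *: delta (tabloid (perm_tab _ t))).
  apply/permP => z; rewrite !permM -{1}(col_fixN hs).
  case: (tpermP x N z) => [->|->|hzx hzN]; first by rewrite tpermL.
    by rewrite tpermR.
  by rewrite tpermD // (inj_eq perm_inj) eq_sym; apply/eqP.
rewrite exchange_big /=.
rewrite (eq_bigr (fun x => if row0 x then \sum_(s in col_stab t)
   ((-1) ^+ odd_perm s : algC) *: delta (tabloid (perm_tab s t)) else 0)); last first.
  move=> x hxN; case: ifP => h; last by apply: nonrow0_zero => //; rewrite h.
  apply: eq_bigr => s _; rewrite [in LHS]tabloid_perm tabloid_stab ?row0_stab //.
  by rewrite -tabloid_perm.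
rewrite -big_mkcondr /= sumr_const scaler_nat; congr (_ *+ _).
by apply: eq_card => x; rewrite inE.
Qed.

Lemma card_row0 : #|[set x | (x != N) && row0 x]| = (nth 0%N la 0).-1.
Proof.
have -> : [set x | (x != N) && row0 x] = [set x | row0 x] :\ N.
  by apply/setP => x; rewrite !inE.
have hS : forall j : 'I_(nth 0%N la 0),
    t (i0, widen_ord Hk j) = Some (odflt N (t (i0, widen_ord Hk j))).
  move=> k; have : t (i0, widen_ord Hk k) != None by rewrite Hdiag /in_diagram /= Hi0.
  by case: (t _).
have hA : #|[set x | row0 x]| = nth 0%N la 0.
  have -> : [set x | row0 x] = [set odflt N (t (i0, widen_ord Hk j)) | j : 'I_(nth 0%N la 0)].
    apply/setP => x; rewrite inE; apply/existsP/imsetP => [[j /eqP hj]|[j _ ->]].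
      have hd : in_diagram la (i0, j) by rewrite -Hdiag hj.
      rewrite /in_diagram /= Hi0 in hd.
      exists (Ordinal hd) => //.
      by rewrite (_ : widen_ord Hk (Ordinal hd) = j) ?hj //; apply: ord_inj.
    by exists (widen_ord Hk j); rewrite -hS.
  rewrite card_imset ?card_ord // => j j' E.
  move: (hS j'); rewrite -E => h'; case: (Hinj (hS j) h') => h; apply: ord_inj.
  exact: h.
rewrite (cardsD1 N) in hA.
have hN0 : N \in [set x | row0 x] by rewrite inE; apply/existsP; exists jN; rewrite HN.
rewrite hN0 /= in hA; by rewrite -hA add1n.
Qed.

End Tab.

Unset Implicit Arguments.
Set Strict Implicit.

Theorem proposition3 (n : nat) (la : seq nat) (t : tab n) :
  (3 <= n)%N ->
  is_partition n la ->
  (2 <= size la)%N ->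
  (nth 0%N la 1 < nth 0%N la 0)%N ->
  is_standard la t ->
  (forall c : 'I_n * 'I_n, val c.1 = 0%N -> val c.2 = (nth 0%N la 0).-1 ->
     omap val (t c) = Some n.-1) ->
  JM (polytabloid t) =
    ((n%:Z - (sumn (behead la))%:Z - 1)%:~R : algC) *: polytabloid t.
Proof.
move=> Hn Hp Hs Hl Hst Htop.
case/and3P: Hp => Hsorted Hpos /eqP Hsum.
case/andP: Hst => /andP[/forallP Hd /forallP Hi] _.
have Hdiag : forall c, (t c != None) = in_diagram la c.
  move=> c; by have := Hd c; move/eqP.
have Hinj : inj_tab t.
  move=> c c' x h1 h2; have := Hi c; move/forallP/(_ c'); rewrite h1 h2 /= eqxx /=.
  by move/eqP.
have Hsort : forall i j, (i <= j)%N -> (nth 0%N la j <= nth 0%N la i)%N.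
  move=> i j hij; case: (ltnP j (size la)) => hj; last by rewrite nth_default.
  have tr : transitive (fun a b : nat => (b <= a)%N).
    by move=> a b c h1 h2; apply: leq_trans h2 h1.
  apply: (sorted_leq_nth tr leqnn 0%N Hsorted) => //; rewrite inE; lia.
have Hk : (nth 0%N la 0 <= n)%N.
  by rewrite -Hsum; case: (la) => //= a r; apply: leq_addr.
have Hn0 : (0 < n)%N by lia.
have HjN : ((nth 0%N la 0).-1 < n)%N by lia.
pose i0 := Ordinal Hn0.
pose jN := Ordinal HjN.
have := Htop (i0, jN) erefl erefl.
case EN: (t (i0, jN)) => [N|] //= [] HNv.
have Hsplit : n = (nth 0%N la 0 + sumn (behead la))%N.
  by rewrite -Hsum; case: (la).
case: (boolP [forall x, [exists c, t c == Some x]]) => [/forallP Hsu | Hns].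
  have Hsurj : forall x, exists c, t c = Some x.
    by move=> x; have /existsP [c /eqP hc] := Hsu x; exists c.
  rewrite (JM_poly Hinj Hdiag Hsurj Hsort Hl (i0 := i0) (jN := jN) erefl erefl EN HNv Hk).
  rewrite (card_row0 Hinj Hdiag (i0 := i0) (jN := jN) erefl EN Hk).
  congr (_ *: _).
  have -> : (n%:Z - (sumn (behead la))%:Z - 1 = ((nth 0%N la 0).-1)%:Z)%R by lia.
  by [].
have H0 : forall s, (s \in col_stab t) = false.
  move=> s; apply/negP; rewrite inE => /forallP hs; apply: (negP Hns).
  apply/forallP => x; have /existsP[j /existsP[i /existsP[i' /andP[h _]]]] := hs x.
  by apply/existsP; exists (i, j).
have P0 : polytabloid t = 0 by rewrite /polytabloid big1 // => s; rewrite H0.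
rewrite P0 scaler0 /JM big1 // => x _; rewrite big1 // => y _.
by rewrite /Defs.act big1 // => S _; rewrite ffunE scale0r.
Qed.
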